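(* Let $0<a\le1\le b<\infty$, $\varphi(s)=\max\{s^a,s^b\}$ for $s>0$, let $c,d>0$ with $cd\le1$, and $g(x)=xF(c,d;c+d;x)$ for $x\in(0,1)$. Then for every $s>0$, $$g\!\left(\frac{\varphi(s)}{1+\varphi(s)}\right)\le\frac ba\max\left\{g^a\!\left(\frac{s}{1+s}\right),\ g\!\left(\frac{s}{1+s}\right)\right\}.$$
   Context: $F(a,b;c;x)$ is the Gaussian hypergeometric function $\sum_{n\ge0}\frac{(a)_n(b)_n}{(c)_n}\frac{x^n}{n!}$ ($|x|<1$), with $(a)_n=a(a+1)\cdots(a+n-1)$, $(a)_0=1$. Here $g^a(y)$ means $(g(y))^a$, and the exponents $a,b$ are distinct from the hypergeometric parameters $c,d$. *)

(* Defs.v *)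
From Stdlib Require Import Reals Arith ClassicalEpsilon.
Open Scope R_scope.

Fixpoint poch (a : R) (n : nat) : R :=
  match n with
  | O => 1
  | S k => poch a k * (a + INR k)
  end.

Definition hyp_term (a b c x : R) (n : nat) : R :=
  poch a n * poch b n / poch c n * x ^ n / INR (Factorial.fact n).

(* F(a,b;c;x) := sum of the series (chosen via classical choice;
   the series converges for |x| < 1 and c not a non-positive integer). *)
Definition hyp2F1 (a b c x : R) : R :=
  epsilon (inhabits 0) (fun l => infinite_sum (hyp_term a b c x) l).

Definition gfun (c d x : R) : R := x * hyp2F1 c d (c + d) x.

Definition phi (a b s : R) : R := Rmax (Rpower s a) (Rpower s b).

(* Main.v *)
Require Import Defs.
From Stdlib Require Import Reals Lra Lia Psatz ClassicalEpsilon FunctionalExtensionality.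
From Coquelicot Require Import Coquelicot.
Open Scope R_scope.

Lemma ln_le' x y : 0 < x -> x <= y -> ln x <= ln y.
Proof. intros Hx [H|H]. left; apply ln_increasing; auto. subst; lra. Qed.

Lemma exp_le' x y : x <= y -> exp x <= exp y.
Proof. intros [H|H]. left; apply exp_increasing; auto. subst; lra. Qed.

Lemma ln_le_sub1 y : 0 < y -> ln y <= y - 1.
Proof. intros. pose proof (exp_ineq1_le (ln y)). rewrite exp_ln in H0; lra. Qed.

Lemma ln1p_le s : 0 <= s -> ln (1+s) <= s.
Proof. intros. pose proof (ln_le_sub1 (1+s)). lra. Qed.

Lemma ln1p_ge s : 0 <= s -> s/(1+s) <= ln (1+s).
Proof. intros. pose proof (ln_le_sub1 (/(1+s))).
  rewrite ln_Rinv in H0 by lra.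
  assert (/(1+s) - 1 = - (s/(1+s))) by (field; lra). assert (0 < /(1+s)) by (apply Rinv_0_lt_compat; lra); lra.
Qed.

Lemma ln1p_pos s : 0 < s -> 0 < ln (1+s).
Proof. intros. rewrite <- ln_1. apply ln_increasing; lra. Qed.

Lemma kmono s t : 0 < s -> s <= t -> s * ln (1+t) <= t * ln (1+s).
Proof.
  intros Hs [Hst|Hst]; [|subst; lra].
  destruct (MVT_cor2 (fun u => u * ln (1+s) - s * ln (1+u))
                     (fun u => ln (1+s) - s / (1+u)) s t Hst) as [c [Hc1 Hc2]].
  - intros c Hc. apply is_derive_Reals. auto_derive. lra. field. lra.
  - assert (s/(1+c) <= s/(1+s)).
    { unfold Rdiv. apply Rmult_le_compat_l. lra. apply Rinv_le_contravar; lra. }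
    pose proof (ln1p_ge s). nra.
Qed.

Lemma der_powK (K : R) n u : is_derive (fun u => u^(S n) / K) u (INR (S n) * u^n / K).
Proof. apply is_derive_Reals. unfold Rdiv. 
  apply (derivable_pt_lim_scal_right (fun u => u^(S n)) ). apply derivable_pt_lim_pow. Qed.

Definition SL (N : nat) (u : R) := sum_f_R0 (fun k => u^(S k) / INR (S k)) N.

Lemma SL_deriv N u : derivable_pt_lim (SL N) u (sum_f_R0 (fun k => u^k) N).
Proof.
  apply is_derive_Reals. induction N.
  - unfold SL. apply (is_derive_ext (fun u => u^(S 0)/INR (S 0))).
    intros; reflexivity.
    replace (sum_f_R0 (fun k => u^k) 0) with (INR 1 * u^0 / INR 1) by (simpl; field).
    apply der_powK.
  - pose proof (is_derive_plus _ _ u _ _ IHN (der_powK (INR (S (S N))) (S N) u)) as H.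
    replace (sum_f_R0 (fun k => u^k) (S N)) with (sum_f_R0 (fun k => u^k) N + INR (S (S N)) * u ^ S N / INR (S (S N))).
    + revert H. apply is_derive_ext. intros t. unfold SL. reflexivity.
    + change (sum_f_R0 (fun k => u^k) (S N)) with (sum_f_R0 (fun k => u^k) N + u^(S N)). field. apply not_0_INR; lia.
Qed.

Lemma SL_0 N : SL N 0 = 0.
Proof. unfold SL. induction N. simpl. field.
  change (sum_f_R0 ?f (S N)) with (sum_f_R0 f N + f (S N)). rewrite IHN.
  unfold Rdiv; rewrite pow_i by lia; ring. Qed.

Lemma log_series x : 0 < x < 1 ->
  infinite_sum (fun k => x^(S k) / INR (S k)) (- ln (1 - x)).
Proof.
  intros Hx.
  assert (Hb : forall N, 0 <= - ln (1-x) - SL N x <= x^(S N) / (1-x)).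
  { intros N.
    destruct (MVT_cor2 (fun u => - ln (1-u) - SL N u)
                (fun u => / (1-u) - sum_f_R0 (fun k => u^k) N) 0 x (proj1 Hx))
      as [c [Hc1 Hc2]].
    - intros c Hc. apply is_derive_Reals.
      apply (is_derive_minus (fun u => - ln (1-u)) (SL N)).
      auto_derive. lra. field. lra.
      apply is_derive_Reals, SL_deriv.
    - rewrite SL_0 in Hc1. replace (1 - 0) with 1 in Hc1 by ring. rewrite ln_1 in Hc1.
      rewrite tech3 in Hc1 by lra.
      replace (/ (1 - c) - (1 - c ^ S N) / (1 - c)) with (c^(S N) / (1-c)) in Hc1 by (field; lra).
      assert (0 <= c^(S N)) by (apply pow_le; lra).
      assert (c^(S N) <= x^(S N)) by (apply pow_incr; lra).
      assert (0 < /(1-c)) by (apply Rinv_0_lt_compat; lra).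
      assert (/(1-c) <= /(1-x)) by (apply Rinv_le_contravar; lra).
      unfold Rdiv in *.
      assert (E: -ln(1-x) - SL N x = c^(S N) * /(1-c) * x) by lra.
      rewrite E.
      assert (c ^ S N * / (1 - c) <= x ^ S N * / (1 - x)).
      { apply Rmult_le_compat; lra. }
      assert (0 <= c ^ S N * / (1 - c)) by (apply Rmult_le_pos; lra).
      split. apply Rmult_le_pos; lra.
      rewrite <- (Rmult_1_r (x ^ S N * / (1 - x))).
      apply Rmult_le_compat; lra. }
  intros eps Heps.
  destruct (pow_lt_1_zero x ltac:(rewrite Rabs_right; lra) (eps * (1-x))) as [N HN].
  { apply Rmult_lt_0_compat; lra. }
  exists N. intros n Hn. unfold R_dist. specialize (Hb n). fold (SL n x).
  specialize (HN (S n) ltac:(lia)). rewrite Rabs_right in HN by (apply Rle_ge, pow_le; lra).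
  rewrite Rabs_left1 by lra.
  assert (x ^ S n / (1 - x) < eps).
  { apply (Rmult_lt_reg_r (1-x)). lra. unfold Rdiv. rewrite Rmult_assoc, Rinv_l by lra. lra. }
  lra.
Qed.

Lemma poch_pos a n : 0 < a -> 0 < poch a n.
Proof. intros Ha. induction n; simpl. lra. pose proof (pos_INR n). nra. Qed.

Lemma isum_ext f g l : (forall n, f n = g n) -> infinite_sum f l -> infinite_sum g l.
Proof. intros H. replace g with f by (apply functional_extensionality; auto). auto. Qed.

Lemma sum_scal r f N : sum_f_R0 (fun n => r * f n) N = r * sum_f_R0 f N.
Proof. induction N; simpl; [ring| rewrite IHN; ring]. Qed.

Lemma cv_const r : Un_cv (fun _ => r) r.
Proof. intros e He; exists 0%nat; intros; unfold R_dist; rewrite Rminus_diag, Rabs_R0; auto. Qed.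

Lemma isum_scal r f l : infinite_sum f l -> infinite_sum (fun n => r * f n) (r*l).
Proof. intros H.
  pose proof (CV_mult (fun _ => r) (fun N => sum_f_R0 f N) r l (cv_const r) H) as H2.
  intros e He. destruct (H2 e He) as [N HN]. exists N. intros n Hn. rewrite sum_scal. apply HN; auto. Qed.

Lemma isum_le f g l1 l2 : (forall n, f n <= g n) -> infinite_sum f l1 -> infinite_sum g l2 -> l1 <= l2.
Proof. intros H H1 H2. apply (@Rle_cv_lim (fun N => sum_f_R0 f N) (fun N => sum_f_R0 g N)); auto.
  intros; apply sum_Rle; auto. Qed.

Lemma bier_id (a b : nat -> R) x y a' b' X Y n :
  a'*X*sum_f_R0 (fun k => b k * y^(S k)) n + b'*Y*sum_f_R0 (fun k => a k * x^(S k)) n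
  - a'*Y*sum_f_R0 (fun k => b k * x^(S k)) n - b'*X*sum_f_R0 (fun k => a k * y^(S k)) n
  = sum_f_R0 (fun k => (a k * b' - a' * b k) * (Y * x^(S k) - X * y^(S k))) n.
Proof. induction n. simpl. ring.
  rewrite !tech5. rewrite <- IHn. cbv beta. ring. Qed.

Lemma pow_cross x y k N : 0 <= x <= y -> (k <= N)%nat ->
  x^(S (S N)) * y^(S k) <= y^(S (S N)) * x^(S k).
Proof. intros Hxy Hk.
  replace (S (S N)) with (S k + (S N - k))%nat by lia. rewrite !pow_add.
  assert (x^(S N - k) <= y^(S N - k)) by (apply pow_incr; auto).
  assert (0 <= x^(S k)) by (apply pow_le; lra). assert (0 <= y^(S k)) by (apply pow_le; lra).
  assert (0 <= x^(S k) * y^(S k)) by (apply Rmult_le_pos; auto).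
  replace (x ^ S k * x ^ (S N - k) * y ^ S k) with ((x ^ S k * y^(S k)) * x ^ (S N - k)) by ring.
  replace (y ^ S k * y ^ (S N - k) * x ^ S k) with ((x ^ S k * y^(S k)) * y ^ (S N - k)) by ring.
  apply Rmult_le_compat_l; auto. Qed.

Lemma arith4 ux uy vx vy a' b' X Y : uy*vx <= ux*vy ->
  0 <= a'*X*vy + b'*Y*ux - a'*Y*vx - b'*X*uy ->
  (uy + a'*Y)*(vx + b'*X) <= (ux + a'*X)*(vy+b'*Y).
Proof. intros. lra. Qed.

Lemma bier_fin (a b : nat -> R) x y : 0 <= x <= y ->
  (forall k m, (k < m)%nat -> a m * b k <= a k * b m) -> forall N,
  sum_f_R0 (fun k => a k * y^(S k)) N * sum_f_R0 (fun k => b k * x^(S k)) N <=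
  sum_f_R0 (fun k => a k * x^(S k)) N * sum_f_R0 (fun k => b k * y^(S k)) N.
Proof. intros Hxy Hab N. induction N.
  - simpl. right; ring.
  - rewrite !tech5. cbv beta. apply arith4; auto.
    rewrite bier_id.
    replace 0 with (sum_f_R0 (fun _ => 0) N) by (rewrite sum_cte; ring).
    apply sum_Rle. intros k Hk. apply Rmult_le_pos.
    + pose proof (Hab k (S N) ltac:(lia)). lra.
    + pose proof (pow_cross x y k N Hxy Hk). lra.
Qed.

Lemma bier_lim a b x y gx gy lx ly : 0 <= x <= y ->
  (forall k m, (k < m)%nat -> a m * b k <= a k * b m) ->
  infinite_sum (fun k => a k * x^(S k)) gx -> infinite_sum (fun k => a k * y^(S k)) gy ->
  infinite_sum (fun k => b k * x^(S k)) lx -> infinite_sum (fun k => b k * y^(S k)) ly ->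
  gy * lx <= gx * ly.
Proof. intros H H0 H1 H2 H3 H4.
  apply (@Rle_cv_lim
    (fun N => sum_f_R0 (fun k => a k * y^(S k)) N * sum_f_R0 (fun k => b k * x^(S k)) N)
    (fun N => sum_f_R0 (fun k => a k * x^(S k)) N * sum_f_R0 (fun k => b k * y^(S k)) N)).
  apply bier_fin; auto.
  apply (CV_mult (fun N => sum_f_R0 (fun k => a k * y^(S k)) N) (fun N => sum_f_R0 (fun k => b k * x^(S k)) N)); auto.
  apply (CV_mult (fun N => sum_f_R0 (fun k => a k * x^(S k)) N) (fun N => sum_f_R0 (fun k => b k * y^(S k)) N)); auto.
Qed.

Lemma X_props s : 0 < s -> (0 < s/(1+s) < 1) /\ - ln (1 - s/(1+s)) = ln (1+s).
Proof. intros. split. split. apply Rdiv_lt_0_compat; lra.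
  apply (Rmult_lt_reg_r (1+s)); [lra|]. unfold Rdiv; rewrite Rmult_assoc, Rinv_l by lra; lra.
  replace (1 - s/(1+s)) with (/(1+s)) by (field; lra). rewrite ln_Rinv by lra. ring. Qed.

Lemma X_mono s t : 0 < s -> s <= t -> s/(1+s) <= t/(1+t).
Proof. intros. replace (s/(1+s)) with (1 - /(1+s)) by (field; lra).
  replace (t/(1+t)) with (1 - /(1+t)) by (field; lra).
  assert (/(1+t) <= /(1+s)) by (apply Rinv_le_contravar; lra). lra. Qed.

Section Hyp.
Variables c d : R.
Hypothesis hc : 0 < c.
Hypothesis hd : 0 < d.
Hypothesis hcd : c * d <= 1.

Definition A n := poch c n * poch d n / poch (c+d) n / INR (Factorial.fact n).

Lemma A_pos n : 0 < A n.
Proof. unfold A. pose proof (poch_pos c n hc). pose proof (poch_pos d n hd).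
  pose proof (poch_pos (c+d) n ltac:(lra)). pose proof (lt_INR_0 (Factorial.fact n) (Factorial.lt_O_fact n)).
  unfold Rdiv. repeat apply Rmult_lt_0_compat; auto; apply Rinv_0_lt_compat; auto. Qed.

Lemma A_0 : A 0 = 1.
Proof. unfold A; simpl. field. Qed.

Lemma A_S n : A (S n) = A n * ((c + INR n) * (d + INR n) / ((c+d+INR n) * INR (S n))).
Proof. unfold A. change (Factorial.fact (S n)) with (S n * Factorial.fact n)%nat. rewrite mult_INR. simpl poch.
  pose proof (poch_pos (c+d) n ltac:(lra)). pose proof (INR_fact_neq_0 n).
  pose proof (pos_INR n). rewrite S_INR. field. repeat split; lra. Qed.

Definition B n := INR (S n) * A n.

Lemma B_dec n : B (S n) <= B n.
Proof. unfold B. rewrite A_S. pose proof (A_pos n). pose proof (pos_INR n).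
  rewrite !S_INR.
  assert (Hcd0 : 0 < c*d) by (apply Rmult_lt_0_compat; lra).
  assert (H2 : 2 * (c*d) <= c + d).
  { assert (c * d * (c*d) <= c*d) by (rewrite <- (Rmult_1_r (c*d)) at 3; apply Rmult_le_compat_l; lra).
    destruct (Rle_lt_dec (2*(c*d)) (c+d)) as [?|Hlt]; auto. exfalso.
    assert ((c+d)*(c+d) < (2*(c*d))*(2*(c*d))) by (apply Rmult_le_0_lt_compat; lra).
    assert (0 <= (c-d)*(c-d)) by apply Rle_0_sqr. nra. }
  assert (Hp : (INR n+1+1) * ((c+INR n)*(d+INR n)) <= (INR n+1)*(INR n+1)*(c+d+INR n)).
  { assert (0 <= (1 - c*d)*INR n) by (apply Rmult_le_pos; lra). lra. }
  replace ((INR n + 1 + 1) * (A n * ((c + INR n) * (d + INR n) / ((c + d + INR n) * (INR n + 1)))))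
    with (A n * ((INR n + 1 + 1) * ((c + INR n) * (d + INR n))) / ((c + d + INR n) * (INR n + 1))) by (field; lra).
  assert (0 < (c + d + INR n) * (INR n + 1)) by (apply Rmult_lt_0_compat; lra).
  apply (Rmult_le_reg_r ((c + d + INR n) * (INR n + 1))). auto.
  unfold Rdiv. rewrite Rmult_assoc, Rinv_l by lra.
  replace ((INR n + 1) * A n * ((c + d + INR n) * (INR n + 1))) with (A n * ((INR n + 1) * (INR n + 1) * (c + d + INR n))) by ring.
  rewrite Rmult_1_r. apply Rmult_le_compat_l; lra.
Qed.

Lemma B_anti k m : (k <= m)%nat -> B m <= B k.
Proof. induction 1. lra. pose proof (B_dec m). lra. Qed.

Lemma A_le n : A n <= / INR (S n).
Proof. pose proof (B_anti 0 n ltac:(lia)). unfold B in H. rewrite A_0 in H.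
  simpl INR at 2 in H. pose proof (lt_0_INR (S n) ltac:(lia)).
  apply (Rmult_le_reg_l (INR (S n))); auto. rewrite Rinv_r by lra. lra. Qed.

Lemma A_cond k m : (k < m)%nat -> A m * / INR (S k) <= A k * / INR (S m).
Proof. intros H. pose proof (B_anti k m ltac:(lia)). unfold B in H0.
  pose proof (lt_0_INR (S k) ltac:(lia)). pose proof (lt_0_INR (S m) ltac:(lia)).
  apply (Rmult_le_reg_r (INR (S k) * INR (S m))). nra.
  replace (A m * / INR (S k) * (INR (S k) * INR (S m))) with (INR (S m) * A m) by (field; lra).
  replace (A k * / INR (S m) * (INR (S k) * INR (S m))) with (INR (S k) * A k) by (field; lra).
  lra. Qed.

Lemma hyp_term_eq x n : hyp_term c d (c+d) x n = A n * x^n.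
Proof. unfold hyp_term, A. pose proof (poch_pos (c+d) n ltac:(lra)). pose proof (INR_fact_neq_0 n).
  field; lra. Qed.

Lemma F_sum x : 0 <= x < 1 -> infinite_sum (fun n => A n * x^n) (hyp2F1 c d (c+d) x).
Proof. intros Hx.
  assert (Hex : exists l, infinite_sum (fun n => A n * x^n) l).
  { destruct (Rseries_CV_comp (fun n => A n * x^n) (fun n => 1 * x^n)) as [l Hl].
    - intros n. pose proof (A_pos n). pose proof (A_le n). pose proof (pow_le x n (proj1 Hx)).
      assert (/ INR (S n) <= 1). { rewrite <- Rinv_1. apply Rinv_le_contravar. lra.
        rewrite S_INR; pose proof (pos_INR n); lra. }
      split. apply Rmult_le_pos; lra. apply Rmult_le_compat_r; lra.
    - exists (/(1-x)). apply GP_infinite. rewrite Rabs_right; lra.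
    - exists l; exact Hl. }
  unfold hyp2F1.
  assert (Hex2 : exists l, infinite_sum (hyp_term c d (c+d) x) l).
  { destruct Hex as [l Hl]. exists l. apply (isum_ext (fun n => A n * x^n)); auto.
    intros; rewrite hyp_term_eq; auto. }
  pose proof (epsilon_spec (inhabits 0) _ Hex2) as H.
  apply (isum_ext (hyp_term c d (c+d) x)); auto. intros; apply hyp_term_eq.
Qed.

Lemma g_sum x : 0 <= x < 1 -> infinite_sum (fun n => A n * x^(S n)) (gfun c d x).
Proof. intros Hx. unfold gfun. apply (isum_ext (fun n => x * (A n * x^n))). intros; simpl; ring.
  apply isum_scal, F_sum; auto. Qed.

Lemma L_sum x : 0 < x < 1 -> infinite_sum (fun n => / INR (S n) * x^(S n)) (- ln (1-x)).
Proof. intros. apply (isum_ext (fun k => x^(S k) / INR (S k))). intros; unfold Rdiv; ring.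
  apply log_series; auto. Qed.

Definition Gs s := gfun c d (s/(1+s)).

Lemma Gs_mono s t : 0 < s -> s <= t -> Gs t * ln (1+s) <= Gs s * ln (1+t).
Proof. intros. destruct (X_props s H) as [Hx Ex]. destruct (X_props t ltac:(lra)) as [Ht Et].
  rewrite <- Ex, <- Et. unfold Gs.
  apply (bier_lim A (fun k => / INR (S k)) (s/(1+s)) (t/(1+t))).
  split; [lra| apply X_mono; auto].
  intros; apply A_cond; auto.
  apply g_sum; lra. apply g_sum; lra. apply L_sum; auto. apply L_sum; auto. Qed.

Lemma Gs_le s : 0 < s -> Gs s <= ln (1+s).
Proof. intros. destruct (X_props s H) as [Hx Ex]. rewrite <- Ex. unfold Gs.
  apply (isum_le (fun n => A n * (s/(1+s))^(S n)) (fun n => / INR (S n) * (s/(1+s))^(S n))).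
  intros; apply Rmult_le_compat_r. apply pow_le; lra. apply A_le.
  apply g_sum; lra. apply L_sum; auto. Qed.

Lemma Gs_pos s : 0 < s -> 0 < Gs s.
Proof. intros. destruct (X_props s H) as [Hx Ex]. unfold Gs.
  assert (s/(1+s) <= gfun c d (s/(1+s))).
  { apply (@Rle_cv_lim (fun _ => s/(1+s)) (fun N => sum_f_R0 (fun n => A n * (s/(1+s))^(S n)) N)).
    - intros N. induction N. simpl. rewrite A_0. lra.
      rewrite tech5. assert (0 <= A (S N) * (s/(1+s))^(S (S N))).
      { apply Rmult_le_pos; [left; apply A_pos | apply pow_le; lra]. } lra.
    - apply cv_const.
    - apply g_sum; lra. }
  lra. Qed.
End Hyp.

Lemma Rpow_pos x e : 0 < Rpower x e.
Proof. unfold Rpower; apply exp_pos. Qed.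

Lemma Rpow_anti_base x y e : 0 < x -> x <= y -> e <= 0 -> Rpower y e <= Rpower x e.
Proof. intros. unfold Rpower. apply exp_le'. pose proof (ln_le' x y H H0).
  apply Rmult_le_compat_neg_l; auto. Qed.

Lemma Rpow_split x e : 0 < x -> Rpower x e = x * Rpower x (e-1).
Proof. intros. replace e with (1 + (e-1)) at 1 by ring. rewrite Rpower_plus, Rpower_1 by lra. auto. Qed.

Lemma ineq_i s b : 0 < s -> 1 <= b -> ln (1 + Rpower s b) <= b * ln (1+s).
Proof. intros.
  assert (E: b * ln (1+s) = ln (Rpower (1+s) b)) by (unfold Rpower; rewrite ln_exp; auto).
  rewrite E. pose proof (Rpow_pos s b). apply ln_le'. lra.
  rewrite (Rpow_split (1+s) b) by lra. rewrite (Rpow_split s b) by lra.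
  assert (HP : 1 <= Rpower (1+s) (b-1)).
  { assert (HH : Rpower (1+s) 0 <= Rpower (1+s) (b-1)) by (apply Rle_Rpower; lra).
    rewrite Rpower_O in HH by lra. exact HH. }
  assert (HQ : Rpower s (b-1) <= Rpower (1+s) (b-1)) by (apply Rle_Rpower_l; lra).
  assert (0 <= (Rpower (1+s) (b-1) - Rpower s (b-1)) * s) by (apply Rmult_le_pos; lra).
  lra. Qed.

Lemma ineq_ii s a : 0 < s -> s < 1 -> 0 < a -> a <= 1 ->
  a * ln (1 + Rpower s a) <= Rpower (ln (1+s)) a.
Proof. intros.
  pose proof (ln1p_pos s H) as Hl. pose proof (ln1p_le s ltac:(lra)) as Hls.
  assert (Hlns : ln s < 0) by (rewrite <- ln_1; apply ln_increasing; lra).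
  assert (Ht : s <= Rpower s a).
  { unfold Rpower. rewrite <- (exp_ln s) at 1 by lra. apply exp_le'.
    assert (0 <= (1-a) * (- ln s)) by (apply Rmult_le_pos; lra). lra. }
  pose proof (Rpow_split s a H) as Et.
  pose proof (Rpow_split (ln (1+s)) a Hl) as El.
  assert (H1r : Rpower s (a-1) <= Rpower (ln (1+s)) (a-1)) by (apply Rpow_anti_base; lra).
  pose proof (kmono s (Rpower s a) H Ht) as K.
  assert (K2 : Rpower s a * ln (1+s) = s * (Rpower s (a-1) * ln (1+s))) by (rewrite Et at 1; ring).
  assert (K3 : ln (1 + Rpower s a) <= Rpower s (a-1) * ln (1+s)).
  { apply (Rmult_le_reg_l s); auto. lra. }
  assert (0 < ln (1 + Rpower s a)) by (apply ln1p_pos; lra).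
  assert (a * ln (1 + Rpower s a) <= ln (1 + Rpower s a)).
  { rewrite <- (Rmult_1_l (ln (1 + Rpower s a))) at 2. apply Rmult_le_compat_r; lra. }
  assert (Rpower s (a-1) * ln (1+s) <= Rpower (ln (1+s)) (a-1) * ln (1+s))
    by (apply Rmult_le_compat_r; lra).
  rewrite El. lra. Qed.

Theorem mainTheorem11 (a b c d : R)
  (ha0 : 0 < a) (ha1 : a <= 1) (hb1 : 1 <= b)
  (hc : 0 < c) (hd : 0 < d) (hcd : c * d <= 1) :
  forall s : R, 0 < s ->
    gfun c d (phi a b s / (1 + phi a b s)) <=
      b / a * Rmax (Rpower (gfun c d (s / (1 + s))) a) (gfun c d (s / (1 + s))).
Proof.
  intros s Hs.
  change (gfun c d (phi a b s / (1 + phi a b s))) with (Gs c d (phi a b s)).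
  change (gfun c d (s / (1 + s))) with (Gs c d s).
  assert (Hpos : forall u, 0 < u -> 0 < Gs c d u) by (intros; apply Gs_pos; auto).
  assert (Hle : forall u, 0 < u -> Gs c d u <= ln (1+u)) by (intros; apply Gs_le; auto).
  assert (Hmono : forall u v, 0 < u -> u <= v -> Gs c d v * ln (1+u) <= Gs c d u * ln (1+v))
    by (intros; apply Gs_mono; auto).
  pose proof (Hpos s Hs) as HG. pose proof (Hle s Hs) as HGl.
  pose proof (ln1p_pos s Hs) as Hl.
  assert (Hba : b <= b / a).
  { unfold Rdiv. rewrite <- (Rmult_1_r b) at 1. apply Rmult_le_compat_l. lra.
    rewrite <- Rinv_1. apply Rinv_le_contravar; lra. }
  assert (Hba0 : 0 <= b / a) by (unfold Rdiv; apply Rmult_le_pos; [lra | left; apply Rinv_0_lt_compat; lra]).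
  unfold phi. destruct (Rle_lt_dec 1 s) as [H1 | H1].
  - rewrite Rmax_right by (apply Rle_Rpower; lra).
    assert (Ht : s <= Rpower s b).
    { rewrite <- (Rpower_1 s) at 1 by lra. apply Rle_Rpower; lra. }
    pose proof (Hmono s (Rpower s b) Hs Ht) as M.
    pose proof (ineq_i s b Hs hb1) as I.
    assert (Gs c d (Rpower s b) <= b * Gs c d s).
    { apply (Rmult_le_reg_r (ln (1+s))); auto.
      assert (Gs c d s * ln (1 + Rpower s b) <= Gs c d s * (b * ln (1+s)))
        by (apply Rmult_le_compat_l; lra). lra. }
    assert (b * Gs c d s <= b / a * Gs c d s) by (apply Rmult_le_compat_r; lra).
    assert (b / a * Gs c d s <= b / a * Rmax (Rpower (Gs c d s) a) (Gs c d s))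
      by (apply Rmult_le_compat_l; auto; apply Rmax_r).
    lra.
  - assert (Hlns : ln s < 0) by (rewrite <- ln_1; apply ln_increasing; lra).
    rewrite Rmax_left.
    2:{ unfold Rpower. apply exp_le'. rewrite (Rmult_comm b), (Rmult_comm a).
        apply Rmult_le_compat_neg_l; lra. }
    assert (Ht : s <= Rpower s a).
    { unfold Rpower. rewrite <- (exp_ln s) at 1 by lra. apply exp_le'.
      assert (0 <= (1-a) * (- ln s)) by (apply Rmult_le_pos; lra). lra. }
    pose proof (Hmono s (Rpower s a) Hs Ht) as M.
    pose proof (ineq_ii s a Hs H1 ha0 ha1) as I.
    set (G := Gs c d s) in *. set (T := Gs c d (Rpower s a)) in *.
    set (l := ln (1+s)) in *. set (lt := ln (1 + Rpower s a)) in *.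
    assert (HRG : Rpower G a = G * Rpower G (a-1)) by (apply Rpow_split; auto).
    assert (HRl : Rpower l a = l * Rpower l (a-1)) by (apply Rpow_split; auto).
    assert (HA : Rpower l (a-1) <= Rpower G (a-1)) by (apply Rpow_anti_base; lra).
    assert (S1 : a * (T * l) <= a * (G * lt)) by (apply Rmult_le_compat_l; lra).
    assert (S2 : G * (a * lt) <= G * Rpower l a) by (apply Rmult_le_compat_l; lra).
    assert (S3 : G * Rpower l a <= l * Rpower G a).
    { rewrite HRl, HRG. replace (G * (l * Rpower l (a-1))) with (l * (G * Rpower l (a-1))) by ring.
      apply Rmult_le_compat_l. lra. apply Rmult_le_compat_l; lra. }
    assert (S4 : a * T <= Rpower G a).
    { apply (Rmult_le_reg_r l); auto. lra. }
    assert (S5 : T <= / a * Rpower G a).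
    { apply (Rmult_le_reg_l a); auto. rewrite <- Rmult_assoc, Rinv_r by lra. lra. }
    assert (S6 : / a * Rpower G a <= b / a * Rpower G a).
    { apply Rmult_le_compat_r. left; apply Rpow_pos. unfold Rdiv.
      rewrite <- (Rmult_1_l (/ a)) at 1. apply Rmult_le_compat_r. left; apply Rinv_0_lt_compat; lra. lra. }
    assert (S7 : b / a * Rpower G a <= b / a * Rmax (Rpower G a) G)
      by (apply Rmult_le_compat_l; auto; apply Rmax_l).
    lra.
Qed.
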